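(* Let $\mathbf p$ be a Nash-routing of a max game on a graph with $n\ge2$ nodes, with $C=C(\mathbf p)$, $D=D(\mathbf p)$, and let $\mathbf p^*$ be an optimal routing with $C^*=C(\mathbf p^* )$. If $C\ge D+2\lg n+2$, then $C<2LC^*+2\lg n$.
   Context: A routing game $(\mathbf N,G,\mathcal P)$: players $\{1,\dots,N\}$ ($N\ge1$), a simple graph $G=(V,E)$ with $n=|V|$ nodes, and for each player $i$ a nonempty finite set $\mathcal P_i$ of paths from $u_i$ to $v_i$; $L=\max_{p\in\bigcup_i\mathcal P_i}|p|$ (path length = number of edges). A routing is $\mathbf p=[p_1,\dots,p_N]$, $p_i\in\mathcal P_i$. $C_e(\mathbf p)$ = number of players whose path uses edge $e$; $C_i(\mathbf p)=\max_{e\in p_i}C_e(\mathbf p)$; $D_i(\mathbf p)=|p_i|$; $C(\mathbf p)=\max_eC_e(\mathbf p)$; $D(\mathbf p)=\max_i|p_i|$. Max game: player cost $pc_i=\max(C_i,D_i)$, social cost $SC=\max(C,D)$. A Nash-routing is one where no player can strictly lower $pc_i$ by unilaterally changing its path within $\mathcal P_i$; an optimal routing minimizes $SC$. $\lg=\log_2$. *)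

(* Defs.v *)
From HB Require Import structures.
From mathcomp Require Import all_boot.
From Stdlib Require Import Reals.
Set Implicit Arguments.
Unset Strict Implicit.
Unset Printing Implicit Defensive.

Definition lg (x : R) : R := (ln x / ln 2)%R.

Section Routing.
Variable V : finType.
Variable adj : rel V.

Definition is_edge (f : {set V}) : bool :=
  [exists x, exists y, adj x y && (f == [set x; y])].

Definition is_path (s t : V) (p : seq V) : bool :=
  match p with
  | [::] => false
  | x :: q => [&& x == s, path adj x q, last x q == t & uniq p]
  end.

Definition plen (p : seq V) : nat := (size p).-1.

Definition pedges (p : seq V) : seq {set V} :=
  match p with
  | [::] => [::]
  | x :: q => pairmap (fun a b => [set a; b]) x q
  end.

Variable N : nat.
Definition routing := 'I_N -> seq V.

Definition game_ok (u v : 'I_N -> V) (P : 'I_N -> seq (seq V)) : Prop :=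
  forall i, P i != [::] /\ all (is_path (u i) (v i)) (P i).

Definition is_routing (P : 'I_N -> seq (seq V)) (r : routing) : Prop :=
  forall i, r i \in P i.

Definition congE (r : routing) (f : {set V}) : nat :=
  #|[set i : 'I_N | f \in pedges (r i)]|.
Definition congP (r : routing) (i : 'I_N) : nat :=
  \max_(f <- pedges (r i)) congE r f.
Definition lenP (r : routing) (i : 'I_N) : nat := plen (r i).
Definition Cong (r : routing) : nat := \max_(f : {set V} | is_edge f) congE r f.
Definition Dil (r : routing) : nat := \max_(i < N) lenP r i.

Definition pc (r : routing) (i : 'I_N) : nat := maxn (congP r i) (lenP r i).
Definition SC (r : routing) : nat := maxn (Cong r) (Dil r).

Definition update (r : routing) (i : 'I_N) (q : seq V) : routing :=
  fun j => if j == i then q else r j.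

Definition Nash (P : 'I_N -> seq (seq V)) (r : routing) : Prop :=
  is_routing P r /\
  forall i q, q \in P i -> pc r i <= pc (update r i q) i.

Definition optimal (P : 'I_N -> seq (seq V)) (r : routing) : Prop :=
  is_routing P r /\ forall r', is_routing P r' -> SC r <= SC r'.

Definition Lmax (P : 'I_N -> seq (seq V)) : nat :=
  \max_(i < N) \max_(p <- P i) plen p.

End Routing.

(* Main.v *)
Require Import Defs.
From HB Require Import structures.
From mathcomp Require Import all_boot.
From Stdlib Require Import Reals Lia Lra.

Lemma pedges_edges (V : finType) (adj : rel V) x q :
  path adj x q -> all (is_edge adj) (pairmap (fun a b => [set a; b]) x q).
Proof.
elim: q x => [|y q IH] x //= /andP[hxy hp].
rewrite IH // andbT. apply/existsP; exists x; apply/existsP; exists y.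
by rewrite hxy eqxx.
Qed.

Lemma size_pedges (V : finType) (s : seq V) : size (pedges s) = plen s.
Proof. by case: s => //= x q; rewrite size_pairmap. Qed.

Lemma bigmax_seq_ex (T : eqType) (s : seq T) (F : T -> nat) m :
  0 < m -> m <= \max_(x <- s) F x -> exists2 x, x \in s & m <= F x.
Proof.
move=> m0 H.
case: (boolP (has (fun x => m <= F x) s)) => [/hasP [x xs Hx]|/hasPn Hn].
  by exists x.
have : \max_(x <- s) F x <= m.-1.
  apply/bigmax_leqP_seq => x xs _. have := Hn x xs. rewrite -ltnNge => h.
  by rewrite -ltnS prednK.
move=> h2. have := leq_trans H h2. by rewrite leqNgt ltn_predL m0.
Qed.

Lemma congE_upd (V : finType) N (r : routing V N) i q f :
  congE (update r i q) f <= (congE r f).+1.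
Proof.
rewrite /congE.
apply: (@leq_trans #|i |: [set j | f \in pedges (r j)]|).
  apply: subset_leq_card; apply/subsetP => j; rewrite !inE /update.
  by case: eqP => // _ ->; rewrite orbT.
rewrite cardsU1 -add1n leq_add2r. by case: (_ \notin _).
Qed.

Lemma congE_sum (V : finType) N (r : routing V N) f :
  congE r f = \sum_i nat_of_bool (f \in pedges (r i)).
Proof.
rewrite /congE -sum1_card big_mkcond /=. apply: eq_bigr => i _.
by rewrite inE; case: (_ \in _).
Qed.

Lemma sum_bool_card (T : finType) (A : {set T}) (b : pred T) :
  \sum_(x in A) nat_of_bool (b x) = #|[set x in A | b x]|.
Proof.
rewrite -sum1_card big_mkcond /= [RHS]big_mkcond /=. apply: eq_bigr => x _.
rewrite !inE. by case: (x \in A); case: (b x).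
Qed.

Definition Eset {V : finType} (adj : rel V) {N} (r : routing V N) (c j : nat) : {set {set V}} :=
  [set f : {set V} | is_edge adj f && (c - j <= congE r f)].

Lemma per_i (V : finType) (adj : rel V) N (P : 'I_N -> seq (seq V)) (p ps : routing V N)
   (c Ls j : nat) i :
  Nash P p -> is_routing P ps -> plen (p i) <= Ls -> plen (ps i) <= Ls -> Ls < c - j ->
  all (is_edge adj) (pedges (ps i)) ->
  \sum_(f in Eset adj p c j) nat_of_bool (f \in pedges (p i)) <=
  Ls * \sum_(f in Eset adj p c j.+1) nat_of_bool (f \in pedges (ps i)).
Proof.
move=> [Rp Hn] Rps Hp Hps HL Hall.
rewrite sum_bool_card.
case: (set_0Vmem [set x in Eset adj p c j | x \in pedges (p i)]) => [->|[f0]].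
  by rewrite cards0.
rewrite !inE => /andP[/andP[_ Hf0] f0p].
have Hc : c - j <= pc p i.
  apply: leq_trans Hf0 _. apply: leq_trans (leq_maxl _ _).
  by rewrite /congP (big_rem f0 f0p) /= leq_maxl.
have := leq_trans Hc (Hn i (ps i) (Rps i)).
have Ei : update p i (ps i) i = ps i by rewrite /update eqxx.
rewrite /pc /lenP Ei leq_max => /orP[].
2: by move=> h; have := leq_trans HL (leq_trans h Hps); rewrite ltnn.
rewrite /congP Ei => /bigmax_seq_ex [|f1 f1s Hf1].
  by apply: leq_ltn_trans HL.
have Hf1' : c - j.+1 <= congE p f1.
  have := leq_trans Hf1 (@congE_upd _ _ p i (ps i) f1).
  rewrite subnS. case: (c - j) => //.
have f1E : f1 \in Eset adj p c j.+1.
  by rewrite inE Hf1' andbT; move/allP: Hall; apply.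
have Hs : 1 <= \sum_(f in Eset adj p c j.+1) nat_of_bool (f \in pedges (ps i)).
  by rewrite (bigD1 f1) //= f1s.
apply: (@leq_trans Ls); last by rewrite -{1}[Ls]muln1 leq_mul2l Hs orbT.
apply: leq_trans Hp. rewrite -size_pedges. apply: leq_trans (card_size _).
apply: subset_leq_card. apply/subsetP => x. by rewrite !inE => /andP[].
Qed.

Lemma step (V : finType) (adj : rel V) N (P : 'I_N -> seq (seq V)) (p ps : routing V N)
   (c Ls cs j : nat) :
  Nash P p -> is_routing P ps -> (forall i, plen (p i) <= Ls) -> (forall i, plen (ps i) <= Ls) ->
  Ls < c - j ->
  (forall i, all (is_edge adj) (pedges (ps i))) ->
  (forall f, is_edge adj f -> congE ps f <= cs) ->
  #|Eset adj p c j| * (c - j) <= Ls * (#|Eset adj p c j.+1| * cs).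
Proof.
move=> Hn Rps Hp Hps HL Hall Hcs.
rewrite -!sum_nat_const.
apply: (@leq_trans (\sum_(f in Eset adj p c j) congE p f)).
  by apply: leq_sum => f; rewrite /Eset inE => /andP[].
under eq_bigr do rewrite congE_sum.
rewrite exchange_big /=.
apply: (@leq_trans (\sum_i Ls * \sum_(f in Eset adj p c j.+1) nat_of_bool (f \in pedges (ps i)))).
  apply: leq_sum => i _. exact: (@per_i _ adj _ P p ps c Ls j i Hn Rps (Hp i) (Hps i) HL (Hall i)).
rewrite -big_distrr /= leq_mul2l. apply/orP; right.
rewrite exchange_big /=. apply: leq_sum => f. rewrite inE => /andP[fe _].
rewrite -congE_sum. exact: Hcs.
Qed.

Lemma powE (m k : nat) : Nat.pow m k = expn m k.
Proof. elim: k => // k IH. by rewrite expnS -IH. Qed.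

Lemma real_part (n k : nat) : 0 < n -> expn 2 k <= n * n -> (INR k <= 2 * lg (INR n))%R.
Proof.
move=> n0; rewrite -powE => /leP H.
have Hn : (0 < INR n)%R by apply: lt_0_INR; apply/ltP.
have l2 : (0 < ln 2)%R by rewrite -ln_1; apply: ln_increasing; lra.
have H1 : (2 ^ k <= INR n * INR n)%R.
  rewrite -mult_INR. have -> : (2 = INR 2)%R by simpl; lra.
  rewrite -pow_INR. by apply: le_INR.
have H2 : (INR k * ln 2 <= 2 * ln (INR n))%R.
  rewrite -ln_pow; last lra.
  have -> : (2 * ln (INR n) = ln (INR n * INR n))%R by rewrite ln_mult //; ring.
  case: (Rle_lt_or_eq_dec _ _ H1) => h.
    left; apply: ln_increasing => //; apply: pow_lt; lra.
  by rewrite h; right.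
rewrite /lg.
have -> : (INR k = (INR k * ln 2) / ln 2)%R by field; lra.
have -> : (2 * (ln (INR n) / ln 2) = (2 * ln (INR n)) / ln 2)%R by field; lra.
apply: Rmult_le_compat_r => //. left; apply: Rinv_0_lt_compat. lra.
Qed.

Theorem mainTheorem5 (N : nat) (V : finType) (adj : rel V)
    (u v : 'I_N -> V) (P : 'I_N -> seq (seq V)) (p pstar : 'I_N -> seq V) :
  0 < N ->
  symmetric adj -> irreflexive adj ->
  2 <= #|V| ->
  game_ok adj u v P ->
  Nash P p ->
  optimal adj P pstar ->
  (INR (Cong adj p) >= INR (Dil p) + 2 * lg (INR #|V|) + 2)%R ->
  (INR (Cong adj p) < 2 * INR (Lmax P) * INR (Cong adj pstar) + 2 * lg (INR #|V|))%R.
Proof.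
move=> N0 Hsym Hirr Hn2 Hgame Hnash Hopt Hcd.
set n := #|V|. set c := Cong adj p. set Ls := Lmax P. set cs := Cong adj pstar.
have n0 : 0 < n by apply: leq_trans Hn2.
set k := trunc_log 2 (n * n).
have nn0 : 0 < n * n by rewrite muln_gt0 n0.
have Hk1 : expn 2 k <= n * n := trunc_logP (isT : 1 < 2) nn0.
have Hk2 : n * n < expn 2 k.+1 := trunc_log_ltn _ (isT : 1 < 2).
have Hk0 : 1 <= k.
  apply: trunc_log_max => //. rewrite expn1. apply: leq_trans Hn2 _.
  by rewrite leq_pmulr.
apply: Rnot_le_lt => Hle.
have HC : 2 * (Ls * cs) + k <= c.
  have Hr := real_part _ _ n0 Hk1.
  apply/leP; apply: INR_le. rewrite -!multE -plusE plus_INR !mult_INR.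
  have -> : INR 2 = 2%R by simpl; lra.
  lra.
have Lbound : forall i q, q \in P i -> plen q <= Ls.
  move=> i q qP. rewrite /Ls /Lmax.
  apply: (@leq_trans (\max_(q <- P i) plen q)).
    by rewrite (big_rem q qP) /= leq_maxl.
  by rewrite [X in _ <= X](bigD1 i) //= leq_maxl.
have Hp : forall i, plen (p i) <= Ls := fun i => Lbound i _ (Hnash.1 i).
have Hps : forall i, plen (pstar i) <= Ls := fun i => Lbound i _ (Hopt.1 i).
have Hall : forall i, all (is_edge adj) (pedges (pstar i)).
  move=> i; have := (Hgame i).2; move/allP/(_ _ (Hopt.1 i)).
  case: (pstar i) => //= x q /and4P[_ hp _ _]. exact: pedges_edges.
have Hcs : forall f, is_edge adj f -> congE pstar f <= cs.
  move=> f hf. by rewrite /cs /Cong (bigD1 f) //= leq_maxl.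
have c0 : 0 < c by apply: leq_trans Hk0 (leq_trans (leq_addl _ _) HC).
have [f0 f0E] : exists f0, f0 \in Eset adj p c 0.
  case: (boolP [exists f, (f \in Eset adj p c 0)]) => [/existsP[f0 Hf0] | /existsPn Hno].
    by exists f0.
  have : c <= c.-1.
    rewrite {1}/c /Cong; apply/bigmax_leqP => f fe; have := Hno f.
    rewrite inE fe subn0 /= -ltnNge => h. by rewrite -ltnS prednK.
  by rewrite leqNgt ltn_predL c0.
have [i0 Hi0] : exists i0, f0 \in pedges (p i0).
  move: f0E; rewrite inE subn0 => /andP[_ h].
  have : 0 < congE p f0 by apply: leq_trans h.
  rewrite /congE => /card_gt0P [i0]; rewrite inE => hi; by exists i0.
have Ls1 : 0 < Ls.
  have : 0 < size (pedges (p i0)) by case: (pedges _) Hi0.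
  rewrite size_pedges => h. exact: leq_trans h (Hp i0).
have Hpi := allP (Hgame i0).2 _ (Hnash.1 i0).
have Hpsi := allP (Hgame i0).2 _ (Hopt.1 i0).
have uv : u i0 != v i0.
  move: Hpi Hi0. case: (p i0) => [|x q] //; rewrite /is_path => /and4P[/eqP hx _ /eqP hl hu].
  case: q hl hu => [|y q] // hl hu _.
  apply/eqP => e. move: hu; rewrite cons_uniq => /andP[hxn _].
  have hm := mem_last y q.
  have hl' : last y q = v i0 by exact hl.
  rewrite hl' -e -hx in hm. by rewrite hm in hxn.
have cs1 : 0 < cs.
  move: Hpsi (Hall i0). case ps: (pstar i0) => [|x [|y q]] //; rewrite /is_path.
    move=> /and4P[/eqP hx _ /eqP hl _]. by move: uv; rewrite -hx -hl /= eqxx.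
  move=> _ /= /andP[he _]. apply: leq_trans (Hcs _ he).
  rewrite /congE; apply/card_gt0P; exists i0. by rewrite inE ps /= inE eqxx.
set M := Ls * cs.
have LM : Ls <= M by rewrite /M leq_pmulr.
have M0 : 0 < M by rewrite /M muln_gt0 Ls1 cs1.
have Hind : forall j, j <= k.+1 -> expn 2 j <= #|Eset adj p c j|.
  elim=> [_|j IH hj].
    change (0 < #|Eset adj p c 0|). by rewrite card_gt0; apply/set0Pn; exists f0.
  have hjk : j <= k by [].
  have h2M : 2 * M <= c - j.
    apply/leP; move/leP: HC; move/leP: hjk; move/leP: LM; rewrite /M -!multE -?plusE -?minusE. lia.
  have HL : Ls < c - j.
    apply/leP; move/leP: h2M; move/leP: LM; move/leP: M0; rewrite /M -!multE -?plusE -?minusE. lia.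
  have key := @step V adj N P p pstar c Ls cs j Hnash (Hopt.1) Hp Hps HL Hall Hcs.
  have h3 : (2 * #|Eset adj p c j|) * M <= #|Eset adj p c j.+1| * M.
    apply: leq_trans (_ : #|Eset adj p c j| * (c - j) <= _).
      by rewrite [2 * _]mulnC -mulnA leq_mul2l h2M orbT.
    apply: leq_trans key _. by rewrite mulnCA.
  rewrite leq_pmul2r // in h3.
  apply: leq_trans h3. by rewrite expnS leq_mul2l IH ?orbT // ltnW.
have hcard : #|Eset adj p c k.+1| <= n * n.
  apply: (@leq_trans #|[set [set x.1; x.2] | x in [set: V * V]]|).
    apply: subset_leq_card; apply/subsetP => f.
    rewrite inE => /andP[/existsP[x /existsP[y /andP[_ /eqP ->]]] _].
    by apply/imsetP; exists (x, y).
  apply: leq_trans (leq_imset_card _ _) _. by rewrite cardsT card_prod.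
have := leq_trans (Hind k.+1 (leqnn _)) hcard.
by rewrite leqNgt Hk2.
Qed.
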